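(* Let $X$ be a compact metrizable space, let $G$ be a countable amenable group, let $T$ be an action of $G$ on $X$ by homeomorphisms, let $R$ be a commutative unital ring, and let $k$ be a nonnegative even integer. Then $\mathrm{smcid}_k(T;R)\leq\mathrm{mcid}_k(T;R)$.
   Context: Covers: a finite open cover of a closed set $Y \subseteq X$ in $X$ is a finite collection of nonempty open subsets of $X$ whose union contains $Y$. A cover $\mathcal{V}$ refines $\mathcal{U}$ if each member of $\mathcal{V}$ lies in some member of $\mathcal{U}$. The order is $\mathrm{ord}(\mathcal{U}) = \max_{x\in X}\mathrm{Card}\{U\in\mathcal{U}: x\in U\} - 1$, and $\mathcal{D}_Y(\mathcal{U})$ is the least order of a finite open cover of $Y$ in $X$ refining $\mathcal{U}$. With $\mathcal{U}\cap Y = \{U\cap Y : U\in\mathcal{U}, U\cap Y\neq\varnothing\}$, $\check{H}^k(Y;\mathcal{U};R)$ is the set of elements of Čech cohomology $\check{H}^k(Y;R)$ representable by Čech cocycles arising from $\mathcal{U}\cap Y$. A nonempty finite $F \subseteq G$ is $(G_0,\delta)$-invariant if $\mathrm{Card}(gF\cap F) > (1-\delta)\mathrm{Card}(F)$ for all $g\in G_0$. $\mathrm{mcid}_k(T;R)$ is the largest $d\in[0,\infty)$ such that for every $\varepsilon>0$ there are a closed $Y\subseteq X$, a finite open cover $\mathcal{U}$ of $Y$ in $X$ with $\mathcal{D}_Y(\mathcal{U})\in\{k,k+1\}$, and $\eta\in\check{H}^k(Y;\mathcal{U};R)$ such that for every finite $G_0\subseteq G$ and every $\delta>0$ there are a $(G_0,\delta)$-invariant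 nonempty finite $F\subseteq G$ and $F_0\subseteq F$ with: (1) the cup product over $g\in F_0$ of the classes $T_g^*(\eta)\in\check{H}^k(T_g^{-1}(Y);R)$, restricted to $\bigcap_{h\in F_0}T_h^{-1}(Y)$, is nonzero (the empty cup product being $1$); and (2) $k\,\mathrm{Card}(F_0)/\mathrm{Card}(F) > d-\varepsilon$. Elementary symmetric polynomials of classes: for a finite set $F$ with $n=\mathrm{Card}(F)$ enumerated as $g_1,\dots,g_n$, classes $\eta_g\in\check{H}^k(X;R)$ ($k$ even) and $0\le r\le n$, $\sigma_r((\eta_g)_{g\in F}) = \sum_{1\le j_1<\cdots<j_r\le n}\eta_{g_{j_1}}\smile\cdots\smile\eta_{g_{j_r}}$ (with $\sigma_0 = 1$). $\mathrm{smcid}_k(T;R)$ is the largest $d\in[0,\infty)$ such that there are a finite open cover $\mathcal{U}$ of $X$ with $\mathcal{D}_X(\mathcal{U})\in\{k,k+1\}$ and $\eta\in\check{H}^k(X;\mathcal{U};R)$ such that for every finite $G_0\subseteq G$ and every $\varepsilon>0$ there are a $(G_0,\varepsilon)$-invariant nonempty finite $F\subseteq G$ and $r\in\{0,1,\ldots,\mathrm{Card}(F)\}$ with $\sigma_r((T_g^*(\eta))_{g\in F})\neq 0$ and $kr/\mathrm{Card}(F) > d-\varepsilon$. *)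

(* Defs.v *)
From HB Require Import structures.
From mathcomp Require Import all_boot all_order all_algebra.
From mathcomp Require Import all_classical all_reals all_analysis.
From mathcomp Require Import Rstruct Rstruct_topology.

Set Implicit Arguments.
Unset Strict Implicit.
Unset Printing Implicit Defensive.

Import Order.TTheory GRing.Theory Num.Theory.
Local Open Scope classical_set_scope.
Local Open Scope ring_scope.

Notation Real := Rdefinitions.R.

Definition metrizable (X : topologicalType) : Prop :=
  exists d : X -> X -> Real,
    [/\ (forall x y, d x y = 0 <-> x = y),
        (forall x y, d x y = d y x),
        (forall x y z, d x z <= d x y + d y z) &
        (forall A : set X, open A <->
           (forall x, A x -> exists2 e : Real, 0 < e & forall y, d x y < e -> A y))].

Definition is_group (G : Type) (mul : G -> G -> G) (one : G) (inv : G -> G) : Prop :=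
  [/\ associative mul, left_id one mul & left_inverse one inv mul].

Definition is_action (G X : Type) (mul : G -> G -> G) (one : G) (T : G -> X -> X) : Prop :=
  (forall x, T one x = x) /\ (forall g h x, T (mul g h) x = T g (T h x)).

Definition bounded_fun (G : Type) (f : G -> Real) : Prop :=
  exists M : Real, forall x, `|f x| <= M.

Definition amenable (G : Type) (mul : G -> G -> G) : Prop :=
  exists m : (G -> Real) -> Real,
    [/\ (forall f g, bounded_fun f -> bounded_fun g ->
           m (fun x => f x + g x) = m f + m g),
        (forall (a : Real) f, bounded_fun f -> m (fun x => a * f x) = a * m f),
        (forall f, bounded_fun f -> (forall x, 0 <= f x) -> 0 <= m f),
        m (fun _ => 1) = 1 &
        (forall g f, bounded_fun f -> m (fun x => f (mul g x)) = m f)].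

Section Covers.
Variable X : topologicalType.

Definition covers (Z : set X) (U : seq (set X)) : Prop :=
  (forall i, (i < size U)%N -> open (nth set0 U i)) /\
  (forall x, Z x -> exists2 i, (i < size U)%N & nth set0 U i x).

(* the members are pairwise distinct (a collection, i.e. a set of opens) *)
Definition distinct_members (U : seq (set X)) : Prop :=
  forall i j, (i < size U)%N -> (j < size U)%N -> nth set0 U i = nth set0 U j -> i = j.

Definition fin_open_cover (Y : set X) (U : seq (set X)) : Prop :=
  [/\ covers Y U, (forall i, (i < size U)%N -> nth set0 U i !=set0) &
      distinct_members U].

Definition refines (V U : seq (set X)) : Prop :=
  forall j, (j < size V)%N -> exists2 i, (i < size U)%N & nth set0 V j `<=` nth set0 U i.

Definition mult_at (x : X) (U : seq (set X)) : nat := count (fun B => `[< B x >]) U.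

Definition ord_le (U : seq (set X)) (n : int) : Prop :=
  forall x : X, (mult_at x U)%:Z <= n + 1.

Definition D_le (Y : set X) (U : seq (set X)) (n : int) : Prop :=
  exists V, [/\ fin_open_cover Y V, refines V U & ord_le V n].

(* D_Y(U) \in {k, k+1}  (D_Y(U) is the least order of a refining cover) *)
Definition D_in (Y : set X) (U : seq (set X)) (k : nat) : Prop :=
  D_le Y U (k%:Z + 1) /\ ~ D_le Y U (k%:Z - 1).

End Covers.

(* A class in H^p(Z;R) (Z closed in X) is represented by a pair (U, c)      *)
(* where U is a finite family of opens of X covering Z and c a p-cocycle    *)
(* on the nerve of U \cap Z; it is zero iff it becomes a coboundary after   *)
(* pulling back along some refinement (direct-limit definition).            *)

Section Cech.
Variables (X : topologicalType) (A : comPzRingType).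

Definition cochain := seq nat -> A.
Definition crep := (seq (set X) * cochain)%type.

(* s is a simplex of the nerve of U \cap Z (ordered, repetitions allowed) *)
Definition simplex (Z : set X) (U : seq (set X)) (s : seq nat) : Prop :=
  all (fun i => i < size U)%N s /\
  exists x, Z x /\ forall i, i \in s -> nth set0 U i x.

Definition face (s : seq nat) (j : nat) : seq nat := take j s ++ drop j.+1 s.

Definition cobdry (c : cochain) : cochain :=
  fun s => \sum_(j < size s) (-1) ^+ j * c (face s j).

(* c is a p-cocycle (p-cochains live on simplices with p+1 vertices) *)
Definition cocycle (Z : set X) (U : seq (set X)) (p : nat) (c : cochain) : Prop :=
  forall s, size s = p.+2 -> simplex Z U s -> cobdry c s = 0.

Definition coboundary (Z : set X) (U : seq (set X)) (p : nat) (c : cochain) : Prop :=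
  if p is p'.+1 then
    exists b : cochain, forall s, size s = p.+1 -> simplex Z U s -> c s = cobdry b s
  else forall s, size s = 1%N -> simplex Z U s -> c s = 0.

Definition crep_zero (Z : set X) (p : nat) (e : crep) : Prop :=
  exists (V : seq (set X)) (lam : nat -> nat),
    [/\ covers Z V,
        (forall j, (j < size V)%N ->
           (lam j < size e.1)%N /\ nth set0 V j `<=` nth set0 e.1 (lam j)) &
        coboundary Z V p (fun s => e.2 (map lam s))].

(* common refinement of two covers: index m <-> (m %/ size V, m %% size V) *)
Definition meet_cover (U V : seq (set X)) : seq (set X) :=
  [seq nth set0 U (m %/ size V) `&` nth set0 V (m %% size V) | m <- iota 0 (size U * size V)].

Definition cr_add (e f : crep) : crep :=
  (meet_cover e.1 f.1,
   fun s => e.2 (map (divn^~ (size f.1)) s) + f.2 (map (modn^~ (size f.1)) s)).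

(* cup product of a p-class e with a class f (Alexander-Whitney formula) *)
Definition cr_cup (p : nat) (e f : crep) : crep :=
  (meet_cover e.1 f.1,
   fun s => e.2 (map (divn^~ (size f.1)) (take p.+1 s)) *
            f.2 (map (modn^~ (size f.1)) (drop p s))).

Definition cr_one : crep := ([:: setT], fun _ => 1).
Definition cr_zero : crep := ([:: setT], fun _ => 0).

Definition cr_pull (f : X -> X) (e : crep) : crep := ([seq f @^-1` B | B <- e.1], e.2).

Definition cr_prod (k : nat) (es : seq crep) : crep := foldr (cr_cup k) cr_one es.

Fixpoint cr_esym (k : nat) (es : seq crep) (r : nat) : crep :=
  match es with
  | [::] => if r is 0%N then cr_one else cr_zero
  | e :: es' => if r is r'.+1 then cr_add (cr_esym k es' r) (cr_cup k e (cr_esym k es' r'))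
                else cr_one
  end.

End Cech.

Section Dims.
Variables (X : topologicalType) (G : countType) (mul : G -> G -> G)
          (T : G -> X -> X) (A : comPzRingType).

Definition invariant (G0 : seq G) (delta : Real) (F : seq G) : Prop :=
  [/\ F != [::], uniq F &
      forall g, g \in G0 ->
        (1 - delta) * (size F)%:R < (size [seq y <- map (mul g) F | y \in F])%:R].

Definition mcid_prop (k : nat) (d : Real) : Prop :=
  forall eps : Real, 0 < eps ->
  exists (Y : set X) (U : seq (set X)) (c : cochain A),
    [/\ closed Y, fin_open_cover Y U, D_in Y U k, cocycle Y U k c &
      forall (G0 : seq G) (delta : Real), 0 < delta ->
      exists (F F0 : seq G),
        [/\ invariant G0 delta F, uniq F0, {subset F0 <= F},
          ~ crep_zero [set x | forall h, h \in F0 -> Y (T h x)] (k * size F0)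
              (cr_prod k [seq cr_pull (T g) (U, c) | g <- F0]) &
          d - eps < (k * size F0)%:R / (size F)%:R]].

Definition smcid_prop (k : nat) (d : Real) : Prop :=
  exists (U : seq (set X)) (c : cochain A),
    [/\ fin_open_cover setT U, D_in setT U k, cocycle setT U k c &
      forall (G0 : seq G) (eps : Real), 0 < eps ->
      exists (F : seq G) (r : nat),
        [/\ invariant G0 eps F, (r <= size F)%N,
          ~ crep_zero setT (k * r) (cr_esym k [seq cr_pull (T g) (U, c) | g <- F] r) &
          d - eps < (k * r)%:R / (size F)%:R]].

Definition mcid (k : nat) : \bar Real :=
  ereal_sup [set (d%:E)%E | d in [set d : Real | 0 <= d /\ mcid_prop k d]].

Definition smcid (k : nat) : \bar Real :=
  ereal_sup [set (d%:E)%E | d in [set d : Real | 0 <= d /\ smcid_prop k d]].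

End Dims.

(* Main.v *)
Require Import Defs.
From HB Require Import structures.
From mathcomp Require Import all_boot all_order all_algebra.
From mathcomp Require Import all_classical all_reals all_analysis.
From mathcomp Require Import Rstruct Rstruct_topology.
From mathcomp Require Import ring.

Set Implicit Arguments.
Unset Strict Implicit.
Unset Printing Implicit Defensive.
Import Order.TTheory GRing.Theory Num.Theory.
Local Open Scope ring_scope.

Section Alg.
Variable A : comPzRingType.
Implicit Types (c : cochain A) (s t u : seq nat).

Lemma face_cons0 (x : nat) t : face (x :: t) 0 = t.
Proof. by rewrite /face /= drop0. Qed.
Lemma face_consS (x : nat) t j : face (x :: t) j.+1 = x :: face t j.
Proof. by []. Qed.
Lemma map_face (f : nat -> nat) s j : map f (face s j) = face (map f s) j.
Proof. by rewrite /face map_cat map_take map_drop. Qed.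

Lemma cobdry_nil c : cobdry c [::] = 0.
Proof. by rewrite /cobdry big_ord0. Qed.

Lemma cobdry_cons c x t : cobdry c (x :: t) = c t - cobdry (fun u => c (x :: u)) t.
Proof.
rewrite /cobdry /= big_ord_recl /= expr0 mul1r face_cons0; congr (_ + _).
rewrite -sumrN; apply: eq_bigr => j _.
by rewrite /bump leq0n add1n face_consS exprS mulN1r mulNr.
Qed.

Lemma cobdry_ext c1 c2 s : (forall u, c1 u = c2 u) -> cobdry c1 s = cobdry c2 s.
Proof. by move=> e; apply: eq_bigr => j _; rewrite e. Qed.

Lemma cobdry_map c (f : nat -> nat) s :
  cobdry (fun u => c (map f u)) s = cobdry c (map f s).
Proof. by rewrite /cobdry size_map; apply: eq_bigr => j _; rewrite map_face. Qed.

Lemma cobdryB c1 c2 s : cobdry (fun u => c1 u - c2 u) s = cobdry c1 s - cobdry c2 s.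
Proof. by rewrite /cobdry -sumrB; apply: eq_bigr => j _; rewrite mulrBr. Qed.

Lemma cobdryD c1 c2 s : cobdry (fun u => c1 u + c2 u) s = cobdry c1 s + cobdry c2 s.
Proof. by rewrite /cobdry -big_split; apply: eq_bigr => j _; rewrite mulrDr. Qed.

Lemma cobdryZ (r : A) c s : cobdry (fun u => r * c u) s = r * cobdry c s.
Proof. by rewrite /cobdry mulr_sumr; apply: eq_bigr => j _; rewrite mulrCA. Qed.

Lemma cobdry0 s : cobdry (fun _ => 0 : A) s = 0.
Proof. by rewrite /cobdry big1 // => j _; rewrite mulr0. Qed.

Section Hom.
Variables lam mu : nat -> nat.
Fixpoint hom c s : A :=
  match s with
  | [::] => 0
  | x :: t => c (lam x :: mu x :: map mu t) - hom (fun u => c (lam x :: u)) t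
  end.

Lemma hom_ext s c1 c2 : (forall u, c1 u = c2 u) -> hom c1 s = hom c2 s.
Proof.
elim: s c1 c2 => [//|x t IH] c1 c2 e /=.
by rewrite e (IH _ (fun u => c2 (lam x :: u))).
Qed.

Lemma homB s c1 c2 : hom (fun u => c1 u - c2 u) s = hom c1 s - hom c2 s.
Proof.
elim: s c1 c2 => [|x t IH] c1 c2 /=; first by rewrite subr0.
rewrite (IH (fun u => c1 (lam x :: u)) (fun u => c2 (lam x :: u))).
ring.
Qed.

Lemma hom_identity s c :
  hom (cobdry c) s + cobdry (hom c) s = c (map mu s) - c (map lam s).
Proof.
elim: s c => [|x t IH] c /=; first by rewrite cobdry_nil !subrr addr0.
rewrite cobdry_cons cobdry_cons.
rewrite (hom_ext t (c2 := fun u => c u - cobdry (fun v => c (lam x :: v)) u));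
  last by move=> u; rewrite cobdry_cons.
rewrite homB cobdry_cons.
rewrite (cobdry_ext t (c2 := fun u => (fun v => c (lam x :: mu x :: v)) (map mu u)
          - hom (fun v => c (lam x :: v)) u)) //.
rewrite cobdryB (cobdry_map (fun v => c (lam x :: mu x :: v))).
have := IH (fun u => c (lam x :: u)).
move: (hom (cobdry (fun u => c (lam x :: u))) t) => h1.
move: (cobdry (hom (fun u => c (lam x :: u))) t) => h2 E.
have -> : c (lam x :: map lam t) = c (lam x :: map mu t) - (h1 + h2) by rewrite E opprB addrC subrK.
ring.
Qed.

Lemma hom_vanish (K : pred nat) s d :
  (forall x, x \in s -> K (lam x) && K (mu x)) ->
  (forall u, size u = (size s).+1 -> all K u -> d u = 0) -> hom d s = 0.
Proof.
elim: s d => [//|x t IH] d HK Hd /=.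
have /andP [K1 K2] := HK x (mem_head _ _).
have Kt : all K (map mu t).
  apply/allP => y /mapP [z zt ->].
  have : z \in x :: t by rewrite inE zt orbT.
  by move/HK/andP => [].
rewrite Hd /=; last by rewrite K1 K2 Kt.
  rewrite IH ?subr0 //.
    by move=> z zt; apply: HK; rewrite inE zt orbT.
  by move=> u su Ku; apply: Hd => /=; rewrite ?su // K1 Ku.
by rewrite size_map.
Qed.
End Hom.

Definition cupc k (a b : cochain A) : cochain A := fun s => a (take k.+1 s) * b (drop k s).

Lemma leibniz k a b s : (k.+2 <= size s)%N ->
  cobdry (cupc k a b) s = cobdry a (take k.+2 s) * b (drop k.+1 s)
     + (-1) ^+ k * (a (take k.+1 s) * cobdry b (drop k s)).
Proof.
elim: k a s => [|k IH] a [|x [|y t]] //= Hs.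
  rewrite cobdry_cons /cupc /= !take0 (cobdry_ext _ (c2 := fun u => a [:: x] * b (x :: u)));
    last by move=> u; rewrite take0.
  rewrite cobdryZ !cobdry_cons !cobdry_nil expr0 mul1r. ring.
rewrite cobdry_cons.
rewrite (cobdry_ext _ (c2 := cupc k (fun u => a (x :: u)) b)) //.
rewrite IH // cobdry_cons /cupc /= exprS.
ring.
Qed.

End Alg.

Local Open Scope classical_set_scope.
Local Open Scope classical_set_scope.
Local Open Scope ring_scope.

Section Top.
Variables (X : topologicalType) (A : comPzRingType).
Implicit Types (Z : set X) (U V W : seq (set X)) (s t : seq nat).

Definition refmap V U (f : nat -> nat) :=
  forall j, (j < size V)%N -> (f j < size U)%N /\ nth set0 V j `<=` nth set0 U (f j).

Lemma simplex_sub Z U s t : simplex Z U s -> {subset t <= s} -> simplex Z U t.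
Proof.
move=> [/allP Hs [x [Zx Hx]]] sub; split; first by apply/allP => i /sub /Hs.
by exists x; split => // i /sub /Hx.
Qed.

Lemma simplex_lt Z U s i : simplex Z U s -> i \in s -> (i < size U)%N.
Proof. by move=> [/allP Hs _] /Hs. Qed.

Lemma simplex_map Z V U f s : refmap V U f -> simplex Z V s -> simplex Z U (map f s).
Proof.
move=> Rf [/allP Hs [x [Zx Hx]]]; split.
  by apply/allP => _ /mapP [i iS ->]; have [] := Rf i (Hs i iS).
exists x; split => // _ /mapP [i iS ->].
by have [_ sub] := Rf i (Hs i iS); apply: sub; apply: Hx.
Qed.

Lemma size_meet U V : size (meet_cover U V) = (size U * size V)%N.
Proof. by rewrite size_map size_iota. Qed.

Lemma nth_meet U V m : (m < size U * size V)%N ->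
  nth set0 (meet_cover U V) m = nth set0 U (m %/ size V) `&` nth set0 V (m %% size V).
Proof. by move=> Hm; rewrite (nth_map 0%N) ?size_iota // nth_iota. Qed.

Lemma pair_div (a b n : nat) : (b < n)%N -> ((a * n + b) %/ n = a)%N.
Proof. by move=> Hb; rewrite divnMDl ?(leq_ltn_trans _ Hb) // divn_small // addn0. Qed.

Lemma pair_mod (a b n : nat) : (b < n)%N -> ((a * n + b) %% n = b)%N.
Proof. by move=> Hb; rewrite modnMDl modn_small. Qed.

Lemma pair_lt (a b m n : nat) : (a < m)%N -> (b < n)%N -> (a * n + b < m * n)%N.
Proof.
move=> ha hb; apply: (@leq_trans (a * n + n)); first by rewrite ltn_add2l.
by rewrite addnC -mulSn leq_mul2r ha orbT.
Qed.

Lemma meet_lt U V m : (m < size U * size V)%N ->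
  (m %/ size V < size U)%N /\ (m %% size V < size V)%N.
Proof.
move=> Hm; have HV : (0 < size V)%N.
  by case: (size V) Hm => //; rewrite muln0.
by rewrite ltn_divLR // ltn_pmod.
Qed.

Lemma refmap_div U V : refmap (meet_cover U V) U (divn^~ (size V)).
Proof.
move=> j; rewrite size_meet => Hj; have [h1 h2] := meet_lt Hj.
by split => //; rewrite nth_meet //; apply: subIsetl.
Qed.

Lemma refmap_mod U V : refmap (meet_cover U V) V (modn^~ (size V)).
Proof.
move=> j; rewrite size_meet => Hj; have [h1 h2] := meet_lt Hj.
by split => //; rewrite nth_meet //; apply: subIsetr.
Qed.

Lemma refmap_comp W V U f g : refmap W V f -> refmap V U g -> refmap W U (g \o f).
Proof.
move=> Rf Rg j Hj; have [h1 s1] := Rf j Hj; have [h2 s2] := Rg _ h1.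
by split => //; apply: subset_trans s2.
Qed.

Lemma refmap_id U : refmap U U id.
Proof. by move=> j Hj; split. Qed.

Lemma refmap_pair W U V f g : refmap W U f -> refmap W V g ->
  refmap W (meet_cover U V) (fun m => f m * size V + g m)%N.
Proof.
move=> Rf Rg j Hj; have [h1 s1] := Rf j Hj; have [h2 s2] := Rg j Hj.
have Hb := pair_lt h1 h2.
rewrite size_meet; split => //; rewrite nth_meet // pair_div // pair_mod //.
by move=> x Wx; split; [apply: s1 | apply: s2].
Qed.

Lemma pair_map Z W U V f g s : refmap W U f -> refmap W V g -> simplex Z W s ->
  map (divn^~ (size V)) (map (fun m => f m * size V + g m)%N s) = map f s /\
  map (modn^~ (size V)) (map (fun m => f m * size V + g m)%N s) = map g s.
Proof.
move=> Rf Rg Hs; rewrite -!map_comp; split; apply/eq_in_map => m ms /=;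
  have [h2 _] := Rg m (simplex_lt Hs ms); by rewrite ?pair_div ?pair_mod.
Qed.

Lemma covers_meet Z U V : covers Z U -> covers Z V -> covers Z (meet_cover U V).
Proof.
move=> [oU cU] [oV cV]; split.
  move=> i; rewrite size_meet => Hi; have [h1 h2] := meet_lt Hi.
  by rewrite nth_meet //; apply: openI; [apply: oU | apply: oV].
move=> x Zx; have [i Hi Ui] := cU x Zx; have [j Hj Vj] := cV x Zx.
have Hb := pair_lt Hi Hj.
exists (i * size V + j)%N; first by rewrite size_meet.
by rewrite nth_meet // pair_div // pair_mod.
Qed.

Lemma cob_ext Z V p (c1 c2 : cochain A) :
  (forall s, simplex Z V s -> c1 s = c2 s) -> coboundary Z V p c1 -> coboundary Z V p c2.
Proof.
case: p => [|p] E /=.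
  by move=> H s s1 Hs; rewrite -E // H.
by move=> [b Hb]; exists b => s s1 Hs; rewrite -E // Hb.
Qed.

Lemma cob_add Z V p (c1 c2 : cochain A) :
  coboundary Z V p c1 -> coboundary Z V p c2 -> coboundary Z V p (fun s => c1 s + c2 s).
Proof.
case: p => [|p] /=.
  by move=> H1 H2 s s1 Hs; rewrite H1 // H2 // addr0.
move=> [b1 H1] [b2 H2]; exists (fun s => b1 s + b2 s) => s s1 Hs.
by rewrite cobdryD H1 // H2.
Qed.

Lemma cob_zero Z V p : coboundary Z V p (fun _ => 0 : A).
Proof.
case: p => [|p] //=; exists (fun _ => 0) => s _ _; by rewrite cobdry0.
Qed.

Lemma cob_pull Z W V p f (c : cochain A) : refmap W V f ->
  coboundary Z V p c -> coboundary Z W p (fun s => c (map f s)).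
Proof.
case: p => [|p] Rf /=.
  by move=> H s s1 Hs; apply: H; [rewrite size_map | apply: simplex_map Hs].
move=> [b Hb]; exists (fun u => b (map f u)) => s s1 Hs.
by rewrite cobdry_map Hb // ?size_map //; apply: simplex_map Hs.
Qed.

Lemma cob_hom Z W U p lam mu (c : cochain A) : refmap W U lam -> refmap W U mu ->
  cocycle Z U p c -> coboundary Z W p (fun s => c (map mu s) - c (map lam s)).
Proof.
move=> Rl Rm Cc; case: p Cc => [|p] Cc /=.
  move=> [|v [|]] //= _ Hs.
  have [/allP Hv [x [Zx Hx]]] := Hs.
  have vW := Hv v (mem_head _ _); have xv := Hx v (mem_head _ _).
  have [l1 l2] := Rl v vW; have [m1 m2] := Rm v vW.
  have := Cc [:: lam v; mu v] erefl.
  rewrite !cobdry_cons cobdry_nil subr0 => ->//.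
  split; first by rewrite /= l1 m1.
  by exists x; split => // i; rewrite !inE => /orP [] /eqP ->; [apply: l2 | apply: m2].
exists (hom lam mu c) => s s1 Hs.
have [/allP Hv [x [Zx Hx]]] := Hs.
rewrite -(hom_identity lam mu s c) (@hom_vanish _ _ _ (fun y => (y < size U)%N && `[< nth set0 U y x >])) ?add0r //.
  move=> y ys; have [l1 l2] := Rl y (Hv y ys); have [m1 m2] := Rm y (Hv y ys).
  by rewrite l1 m1 /=; apply/andP; split; apply/asboolP; [apply: l2 | apply: m2]; apply: Hx.
move=> u su /allP Ku; apply: Cc; first by rewrite su s1.
split; first by apply/allP => i /Ku /andP [].
by exists x; split => // i /Ku /andP [_ /asboolP].
Qed.

Definition good Z p (e : crep X A) := covers Z e.1 /\ cocycle Z e.1 p e.2.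

Definition Refl Z (f g : crep X A) := exists mu, refmap f.1 g.1 mu /\
  forall s, simplex Z f.1 s -> f.2 s = g.2 (map mu s).

Lemma zero_refl Z p (f g : crep X A) : Refl Z f g -> covers Z f.1 ->
  cocycle Z g.1 p g.2 -> crep_zero Z p g -> crep_zero Z p f.
Proof.
move=> [mu [Rmu Emu]] Cf Cg [V [lam [CV Rlam Cob]]].
exists (meet_cover V f.1), (modn^~ (size f.1)); split.
- exact: covers_meet.
- exact: refmap_mod.
have H1 := cob_hom (refmap_comp (@refmap_div V f.1) Rlam) (refmap_comp (@refmap_mod V f.1) Rmu) Cg.
have H2 := cob_pull (@refmap_div V f.1) Cob.
apply: cob_ext (cob_add H1 H2) => s Hs.
rewrite (map_comp mu) (map_comp lam) subrK; symmetry; apply: Emu.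
exact: simplex_map (@refmap_mod V f.1) Hs.
Qed.

Lemma zero_add Z p (a b : crep X A) : crep_zero Z p a -> crep_zero Z p b ->
  crep_zero Z p (cr_add a b).
Proof.
move=> [V1 [l1 [C1 R1 B1]]] [V2 [l2 [C2 R2 B2]]].
have R1' := refmap_comp (@refmap_div V1 V2) R1.
have R2' := refmap_comp (@refmap_mod V1 V2) R2.
exists (meet_cover V1 V2), (fun m => (l1 \o divn^~ (size V2)) m * size b.1 + (l2 \o modn^~ (size V2)) m)%N.
split.
- exact: covers_meet.
- exact: refmap_pair.
apply: cob_ext (cob_add (cob_pull (@refmap_div V1 V2) B1) (cob_pull (@refmap_mod V1 V2) B2)) => s Hs.
have [E1 E2] := pair_map R1' R2' Hs.
rewrite /= in E1 E2 *.
by rewrite E1 E2 -!map_comp.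
Qed.

Lemma zero_of_vanish Z p (e : crep X A) : covers Z e.1 ->
  (forall s, simplex Z e.1 s -> e.2 s = 0) -> crep_zero Z p e.
Proof.
move=> Ce H; exists e.1, id; split => //; first exact: refmap_id.
by apply: cob_ext (cob_zero Z e.1 p) => s Hs; rewrite map_id H.
Qed.

End Top.
Local Open Scope classical_set_scope.
Local Open Scope ring_scope.

Section Good.
Variables (X : topologicalType) (A : comPzRingType).
Implicit Types (Z : set X) (U V W : seq (set X)) (s t : seq nat).

Lemma good_cup Z k q (e f : crep X A) : good Z k e -> good Z q f -> good Z (k + q) (cr_cup k e f).
Proof.
move=> [Ce Ze] [Cf Zf]; split; first exact: covers_meet.
move=> s s2 Hs.
rewrite (cobdry_ext s (c2 := cupc k (fun u => e.2 (map (divn^~ (size f.1)) u))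
                               (fun u => f.2 (map (modn^~ (size f.1)) u)))) //.
have Hk : (k.+2 <= size s)%N by rewrite s2 !ltnS leq_addr.
rewrite leibniz // !cobdry_map.
have -> : cobdry e.2 (map (divn^~ (size f.1)) (take k.+2 s)) = 0.
  apply: Ze; first by rewrite size_map size_takel.
  apply: simplex_map (@refmap_div _ e.1 f.1) _.
  by apply: simplex_sub Hs _ => i; apply: mem_take.
have -> : cobdry f.2 (map (modn^~ (size f.1)) (drop k s)) = 0.
  apply: Zf; first by rewrite size_map size_drop s2 -!addnS addKn.
  apply: simplex_map (@refmap_mod _ e.1 f.1) _.
  by apply: simplex_sub Hs _ => i; apply: mem_drop.
by rewrite mul0r !mulr0 addr0.
Qed.

Lemma good_add Z p (e f : crep X A) : good Z p e -> good Z p f -> good Z p (cr_add e f).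
Proof.
move=> [Ce Ze] [Cf Zf]; split; first exact: covers_meet.
move=> s s2 Hs /=.
rewrite (cobdryD (fun u => e.2 (map (divn^~ (size f.1)) u))
                 (fun u => f.2 (map (modn^~ (size f.1)) u))) !cobdry_map.
rewrite Ze ?Zf ?addr0 ?size_map //.
  exact: simplex_map (@refmap_mod _ e.1 f.1) Hs.
exact: simplex_map (@refmap_div _ e.1 f.1) Hs.
Qed.

Lemma covers_one Z : covers Z [:: setT].
Proof.
split; first by case=> // _; exact: openT.
by move=> x _; exists 0%N.
Qed.

Lemma good_one Z : good Z 0 (cr_one X A).
Proof.
split; first exact: covers_one.
move=> [|a [|b [|]]] //= _ _.
by rewrite !cobdry_cons cobdry_nil subr0 subrr.
Qed.

Lemma good_zero Z p : good Z p (cr_zero X A).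
Proof.
split; first exact: covers_one.
by move=> s _ _; rewrite cobdry0.
Qed.

Lemma good_foldr Z k q (x : crep X A) P : (forall e, List.In e P -> good Z k e) ->
  good Z q x -> good Z (k * size P + q) (foldr (cr_cup k) x P).
Proof.
elim: P => [|e P IH] HP Hx /=; first by rewrite muln0.
have -> : (k * (size P).+1 + q = k + (k * size P + q))%N by rewrite mulnS addnA.
apply: good_cup; first by apply: HP; left.
by apply: IH => // e' He'; apply: HP; right.
Qed.

Lemma good_esym Z k (es : seq (crep X A)) r : (forall e, List.In e es -> good Z k e) ->
  good Z (k * r) (cr_esym k es r).
Proof.
elim: es r => [|e es IH] r Hes /=.
  by case: r => [|r]; [rewrite muln0; exact: good_one | exact: good_zero].
case: r => [|r]; first by rewrite muln0; exact: good_one.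
apply: good_add; first by apply: IH => e' He'; apply: Hes; right.
rewrite mulnS; apply: good_cup; first by apply: Hes; left.
by apply: IH => e' He'; apply: Hes; right.
Qed.

Lemma zero_foldr_zero Z k p P : (forall e, List.In e P -> good Z k e) ->
  crep_zero Z p (foldr (cr_cup k) (cr_zero X A) P).
Proof.
move=> HP; apply: zero_of_vanish.
  by have [] := good_foldr HP (good_zero Z 0).
move=> s _; elim: P HP s => [|e P IH] HP s //=.
by rewrite IH ?mulr0 // => e' He'; apply: HP; right.
Qed.

Lemma Refl_refl Z (e : crep X A) : Refl Z e e.
Proof. by exists id; split; [exact: refmap_id | move=> s _; rewrite map_id]. Qed.

Lemma Refl_trans Z (e f g : crep X A) : Refl Z e f -> Refl Z f g -> Refl Z e g.
Proof.
move=> [m1 [R1 E1]] [m2 [R2 E2]]; exists (m2 \o m1); split.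
  exact: refmap_comp R1 R2.
move=> s Hs; rewrite E1 // E2; last exact: simplex_map R1 Hs.
by rewrite map_comp.
Qed.

Lemma Refl_cup Z k (e x y : crep X A) : Refl Z x y -> Refl Z (cr_cup k e x) (cr_cup k e y).
Proof.
move=> [mu [Rmu Emu]].
have Rd := @refmap_div _ e.1 x.1; have Rm := refmap_comp (@refmap_mod _ e.1 x.1) Rmu.
exists (fun m => (divn^~ (size x.1)) m * size y.1 + (mu \o modn^~ (size x.1)) m)%N; split.
  exact: refmap_pair.
move=> s Hs /=; have [E1 E2] := pair_map Rd Rm Hs; rewrite /= in E1 E2.
rewrite !map_take !map_drop E1 E2; congr (_ * _).
rewrite Emu; first by rewrite map_drop -map_comp.
apply: simplex_sub (simplex_map (@refmap_mod _ e.1 x.1) Hs) _ => i.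
exact: mem_drop.
Qed.

Lemma Refl_dist Z k (e u v : crep X A) :
  Refl Z (cr_cup k e (cr_add u v)) (cr_add (cr_cup k e u) (cr_cup k e v)).
Proof.
set W := meet_cover e.1 (meet_cover u.1 v.1).
have Rd : refmap W e.1 _ := @refmap_div _ e.1 (meet_cover u.1 v.1).
have Rm : refmap W _ _ := @refmap_mod _ e.1 (meet_cover u.1 v.1).
have Ru := refmap_comp Rm (@refmap_div _ u.1 v.1).
have Rv := refmap_comp Rm (@refmap_mod _ u.1 v.1).
have Rfu := refmap_pair Rd Ru.
have Rfv := refmap_pair Rd Rv.
exists (fun m => (fun m => (divn^~ (size (meet_cover u.1 v.1))) m * size u.1 + ((divn^~ (size v.1)) \o (modn^~ (size (meet_cover u.1 v.1)))) m)%N m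
                 * size (meet_cover e.1 v.1)
               + (fun m => (divn^~ (size (meet_cover u.1 v.1))) m * size v.1 + ((modn^~ (size v.1)) \o (modn^~ (size (meet_cover u.1 v.1)))) m)%N m)%N.
split; first exact: refmap_pair.
move=> s Hs /=.
have [E1 E2] := pair_map Rfu Rfv Hs; rewrite /= in E1 E2.
have [F1 F2] := pair_map Rd Ru Hs; rewrite /= in F1 F2.
have [G1 G2] := pair_map Rd Rv Hs; rewrite /= in G1 G2.
rewrite ?map_take ?map_drop E1 E2 ?map_take ?map_drop F1 F2 G1 G2 -!map_comp mulrDr.
done.
Qed.

Lemma Refl_foldr_dist Z k (x y : crep X A) P :
  Refl Z (foldr (cr_cup k) (cr_add x y) P)
         (cr_add (foldr (cr_cup k) x P) (foldr (cr_cup k) y P)).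
Proof.
elim: P => [|e P IH] /=; first exact: Refl_refl.
exact: Refl_trans (Refl_cup k e IH) (Refl_dist Z k e _ _).
Qed.

Lemma In_rcons (T : Type) (e x : T) P : List.In e (rcons P x) -> List.In e P \/ e = x.
Proof.
rewrite -cats1 => H; case: (List.in_app_or _ _ _ H); first by left.
by case => // ->; right.
Qed.

Section Extract.
Variables (G : eqType) (Z : set X) (k : nat) (E : G -> crep X A).
Hypothesis hE : forall g, good Z k (E g).

Lemma extract (es : seq G) P r : (forall e, List.In e P -> good Z k e) ->
  ~ crep_zero Z (k * (size P + r)) (foldr (cr_cup k) (cr_esym k (map E es) r) P) ->
  exists S, [/\ subseq S es, size S = r &
    ~ crep_zero Z (k * (size P + r)) (foldr (cr_cup k) (cr_prod k (map E S)) P)].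
Proof.
have gE : forall es', forall e, List.In e (map E es') -> good Z k e.
  by move=> es' e /List.in_map_iff [g [<- _]].
elim: es P r => [|g es IH] P r HP NZ.
  case: r NZ => [|r] NZ; first by exists [::].
  by exfalso; apply: NZ; apply: zero_foldr_zero.
case: r NZ => [|r] NZ; first by exists [::]; split => //; apply: sub0seq.
case: (EM (crep_zero Z (k * (size P + r.+1))
          (foldr (cr_cup k) (cr_esym k (map E es) r.+1) P))) => Z1; last first.
  have [S [S1 S2 S3]] := IH P r.+1 HP Z1.
  by exists S; split => //; apply: subseq_trans S1 (subseq_cons _ _).
case: (EM (crep_zero Z (k * (size P + r.+1))
          (foldr (cr_cup k) (cr_cup k (E g) (cr_esym k (map E es) r)) P))) => Z2.
  exfalso; apply: NZ => /=.
  have Hx := good_esym r.+1 (gE es).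
  have Hy := good_cup (hE g) (good_esym r (gE es)).
  rewrite -mulnS in Hy.
  have Hfx := good_foldr HP Hx; have Hfy := good_foldr HP Hy.
  have Hf := good_foldr HP (good_add Hx Hy).
  have [Cg Zg] := good_add Hfx Hfy.
  rewrite -mulnDr in Hf Zg.
  apply: zero_refl (Refl_foldr_dist _ _ _ _ _) _ Zg _; first by case: Hf.
  exact: zero_add.
rewrite -foldr_rcons in Z2.
have Hd : (k * (size P + r.+1) = k * (size (rcons P (E g)) + r))%N
  by rewrite size_rcons addSnnS.
rewrite Hd in Z2.
have HPr : forall e, List.In e (rcons P (E g)) -> good Z k e.
  move=> e He; case: (In_rcons He); first exact: HP.
  by move=> ->.
have [S [S1 S2 S3]] := IH (rcons P (E g)) r HPr Z2.
exists (g :: S); split; first by rewrite /= eqxx.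
  by rewrite /= S2.
rewrite Hd; move: S3; rewrite foldr_rcons; exact.
Qed.

End Extract.
End Good.
Local Open Scope classical_set_scope.
Local Open Scope ring_scope.

Lemma good_pull (X : topologicalType) (A : comPzRingType) (f : X -> X) k U (c : cochain A) :
  continuous f -> fin_open_cover setT U -> cocycle setT U k c ->
  good setT k (cr_pull f (U, c)).
Proof.
move=> Hf [[oU cU] _ _] Hc; split; first split.
- move=> i; rewrite size_map => Hi; rewrite (nth_map set0) //.
  by apply: open_comp (oU i Hi) => x _; apply: Hf.
- move=> x _; have [i Hi Ui] := cU (f x) I.
  by exists i; rewrite ?size_map // (nth_map set0).
move=> s s2 [Hs [x [_ Hx]]]; apply: Hc => //; split.
  by move: Hs; rewrite /= size_map.
exists (f x); split => // i iS; have := Hx i iS.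
have : (i < size U)%N by move/allP: Hs => /(_ i iS); rewrite /= size_map.
by move=> Hi; rewrite /= (nth_map set0).
Qed.

Theorem lemma4p3 (X : topologicalType) (G : countType)
  (mul : G -> G -> G) (one : G) (inv : G -> G) (T : G -> X -> X)
  (A : comPzRingType) (k : nat) :
  compact [set: X] -> metrizable X ->
  is_group mul one inv -> amenable mul ->
  is_action mul one T -> (forall g, continuous (T g)) ->
  ~~ odd k ->
  (smcid mul T A k <= mcid mul T A k)%E.
Proof.
move=> _ _ _ _ _ HT _.
rewrite /smcid /mcid; apply: le_ereal_sup => _ [d [d0 Hd] <-]; exists d => //; split => //.
move: Hd => [U [c [HU HD Hc HF]]] eps eps0.
exists setT, U, c; split => //.
move=> G0 delta delta0.
have e0 : 0 < Num.min eps delta by rewrite lt_min eps0 delta0.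
have [F [r [[HF1 HF2 HF3] Hr HNZ Hlt]]] := HF G0 _ e0.
have hE : forall g, good setT k (cr_pull (T g) (U, c)).
  by move=> g; apply: good_pull.
have NZ : ~ crep_zero setT (k * (size (@nil (crep X A)) + r))
    (foldr (cr_cup k) (cr_esym k (map (fun g => cr_pull (T g) (U, c)) F) r) (@nil (crep X A))).
  by rewrite /= add0n.
have [S [S1 S2 S3]] := extract hE (P := @nil (crep X A)) (r := r) (fun e (H : List.In e [::]) => match H with end) NZ.
exists F, S; split.
- split => // g Hg; apply: le_lt_trans (HF3 g Hg).
  apply: ler_wpM2r; first exact: ler0n.
  by rewrite lerD2l lerN2 ge_min lexx orbT.
- exact: subseq_uniq S1 HF2.
- by move=> g; apply: mem_subseq.
- have -> : [set x | forall h, h \in S -> [set: X] (T h x)] = setT.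
    by apply/seteqP; split => x.
  by rewrite S2; move: S3; rewrite /= add0n.
rewrite S2; apply: le_lt_trans Hlt.
by rewrite lerD2l lerN2 ge_min lexx.
Qed.
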